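(* Let $p$ be a prime. Every $p$-$T_0T^\ast$-perfect number $n>1$ has the form $n=p_1^{2p-1}$ for some prime $p_1$.
   Context: For a positive integer $m$, $T(m)$ denotes the product of all positive divisors of $m$, and $T^\ast(m)$ the product of all unitary divisors of $m$ (divisors $d$ with $\gcd(d,m/d)=1$). For an integer $k\ge 2$, an integer $n>1$ is called $k$-$T_0T^\ast$-perfect if $T(T^\ast(n))=n^k$. *)

(* Defs.v *)
From mathcomp Require Import all_boot.
Set Implicit Arguments. Unset Strict Implicit. Unset Printing Implicit Defensive.

Definition T (m : nat) : nat := \prod_(d <- divisors m) d.

Definition Tstar (m : nat) : nat :=
  \prod_(d <- divisors m | coprime d (m %/ d)) d.

Definition kT0Tstar_perfect (k n : nat) : Prop :=
  2 <= k /\ 1 < n /\ T (Tstar n) = n ^ k.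

(* Main.v *)
Require Import Defs.
From mathcomp Require Import all_boot.
Set Implicit Arguments. Unset Strict Implicit.

Lemma divDiv m d : 0 < m -> d %| m -> m %/ (m %/ d) = d.
Proof.
move=> m0 dm; have d0 : 0 < d by apply: dvdn_gt0 dm.
rewrite -{1}(divnK dm) mulKn // divn_gt0 //; exact: dvdn_leq.
Qed.

Lemma prod_pair (m : nat) (P : pred nat) : 0 < m ->
  (forall d, d %| m -> P (m %/ d) = P d) ->
  (\prod_(d <- divisors m | P d) d) ^ 2 = m ^ count P (divisors m).
Proof.
move=> m0 HP.
have pe : perm_eq (divisors m) (map (fun d => m %/ d) (divisors m)).
  apply: uniq_perm; first exact: divisors_uniq.
    rewrite map_inj_in_uniq ?divisors_uniq //.
    move=> x y; rewrite -!dvdn_divisors // => hx hy e.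
    by rewrite -(divDiv m0 hx) e divDiv.
  move=> x; apply/idP/mapP.
    rewrite -dvdn_divisors // => hx; exists (m %/ x).
      by rewrite -dvdn_divisors // dvdn_div.
    by rewrite divDiv.
  by case=> y; rewrite -!dvdn_divisors // => hy ->; apply: dvdn_div.
have e1 : \prod_(d <- divisors m | P d) d = \prod_(d <- divisors m | P d) (m %/ d).
  rewrite (perm_big _ pe) big_map big_seq_cond [RHS]big_seq_cond.
  apply: eq_bigl => i; case hi: (i \in divisors m) => //=.
  by rewrite HP // dvdn_divisors.
rewrite -mulnn {1}e1 -big_split /=.
rewrite big_seq_cond (eq_bigr (fun _ => m)); last first.
  by move=> i /andP[]; rewrite -dvdn_divisors // => hi _; rewrite divnK.
rewrite big_const_seq iter_muln_1; congr (_ ^ _).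
by apply: eq_in_count => i /= ->.
Qed.
Lemma perm_pp q a : prime q ->
  perm_eq (divisors (q ^ a)) (map (expn q) (iota 0 a.+1)).
Proof.
move=> qp; have q1 := prime_gt1 qp; have q0 := prime_gt0 qp.
have qa0 : 0 < q ^ a by rewrite expn_gt0 q0.
apply: uniq_perm; first exact: divisors_uniq.
  by rewrite map_inj_uniq ?iota_uniq //; apply: expnI.
move=> d; rewrite -dvdn_divisors //; apply/dvdn_pfactor/mapP => // -[i].
  by move=> ia ->; exists i => //; rewrite mem_iota add0n ltnS.
by rewrite mem_iota add0n ltnS => ia ->; exists i.
Qed.

Lemma tau_pp q a : prime q -> size (divisors (q ^ a)) = a.+1.
Proof. by move=> qp; rewrite (perm_size (perm_pp a qp)) size_map size_iota. Qed.

Lemma u_pp q a : prime q -> 0 < a ->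
  count (fun d => coprime d (q ^ a %/ d)) (divisors (q ^ a)) = 2.
Proof.
move=> qp a0; have q1 := prime_gt1 qp; have q0 := prime_gt0 qp.
rewrite (permP (perm_pp a qp)) count_map.
rewrite (@eq_in_count _ _ (predU (pred1 0) (pred1 a))); last first.
  move=> i; rewrite mem_iota add0n ltnS => /andP[_ ia] /=.
  rewrite -expnB // /=.
  case: (posnP i) => [->|i0]; first by rewrite coprime1n.
  case: (ltnP i a) => ia2.
    rewrite coprime_pexpl // coprime_pexpr ?subn_gt0 //.
    by rewrite /coprime gcdnn /= (gtn_eqF q1) (ltn_eqF ia2).
  have -> : i = a by apply/eqP; rewrite eqn_leq ia ia2.
  by rewrite subnn coprimen1 eqxx orbT.
apply/eqP; rewrite -(eqn_add2r (count (predI (pred1 0) (pred1 a)) (iota 0 a.+1))).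
rewrite count_predUI.
rewrite (@eq_count _ (predI (pred1 0) (pred1 a)) pred0); last first.
  by move=> i /=; case: eqP => // ->; rewrite eq_sym (gtn_eqF a0).
by rewrite count_pred0 addn0 !count_uniq_mem ?iota_uniq // !mem_iota add0n !ltnS leqnn /= leqnn.
Qed.
Lemma dvd_split d x y : coprime x y -> d %| x * y ->
  d = gcdn d x * gcdn d y.
Proof.
move=> cxy dxy; set g1 := gcdn d x; set g2 := gcdn d y.
apply/eqP; rewrite eqn_dvd; apply/andP; split.
  have h1 : d %| g1 * y.
    have : d %| gcdn (x * y) (d * y) by rewrite dvdn_gcd dxy dvdn_mulr.
    by rewrite -muln_gcdl gcdnC.
  have : d %| gcdn (g1 * y) (g1 * d) by rewrite dvdn_gcd h1 dvdn_mull.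
  by rewrite -muln_gcdr gcdnC.
rewrite Gauss_dvd ?dvdn_gcdl //.
by apply: (coprime_dvdl (dvdn_gcdr _ _)); apply: (coprime_dvdr (dvdn_gcdr _ _)).
Qed.

Lemma tau_mul x y : 0 < x -> 0 < y -> coprime x y ->
  size (divisors (x * y)) = size (divisors x) * size (divisors y).
Proof.
move=> x0 y0 cxy; have xy0 : 0 < x * y by rewrite muln_gt0 x0.
rewrite -(size_allpairs muln); apply: perm_size.
apply: uniq_perm; first exact: divisors_uniq.
  apply: allpairs_uniq; try exact: divisors_uniq.
  move=> [d1 d2] [e1 e2] /allpairsP[[a1 a2] [/= h1 h2 [-> ->]]].
  move=> /allpairsP[[b1 b2] [/= k1 k2 [-> ->]]] /= e.
  move: h1 h2 k1 k2; rewrite -!dvdn_divisors // => h1 h2 k1 k2.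
  have E : forall u v, u %| x -> v %| y -> gcdn x (u * v) = u.
    move=> u v ux vy; rewrite Gauss_gcdl; first exact/gcdn_idPr.
    exact: coprime_dvdr vy cxy.
  have ea : a1 = b1 by rewrite -(E a1 a2) // e E.
  subst b1; congr (_, _); apply/eqP; rewrite -(@eqn_pmul2l a1) ?e //.
  exact: dvdn_gt0 h1.
move=> d; rewrite -dvdn_divisors //; apply/idP/allpairsP.
  move=> dxy; exists (gcdn d x, gcdn d y); rewrite /= -!dvdn_divisors //.
  by rewrite !dvdn_gcdr; split=> //; apply: dvd_split.
move=> [[a b] [/= ha hb ->]]; move: ha hb; rewrite -!dvdn_divisors // => ha hb.
exact: dvdn_mul.
Qed.

From mathcomp Require Import zify.

Lemma tau_ge2 m : 1 < m -> 2 <= size (divisors m).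
Proof.
move=> m1; have m0 : 0 < m by apply: ltnW.
have : size [:: 1; m] <= size (divisors m).
  apply: uniq_leq_size; first by rewrite /= inE (ltn_eqF m1).
  by move=> d; rewrite !inE => /orP[] /eqP ->; rewrite ?divisor1 ?divisors_id.
by [].
Qed.

Theorem mainTheorem7 (p n : nat) :
  prime p -> 1 < n -> kT0Tstar_perfect p n ->
  exists p1 : nat, prime p1 /\ n = p1 ^ (2 * p - 1).
Proof.
move=> pp n1; rewrite /kT0Tstar_perfect => -[_ [_ H]]; have n0 : 0 < n by apply: ltnW.
set M := Tstar n in H.
set u := count (fun d => coprime d (n %/ d)) (divisors n).
have HM : M ^ 2 = n ^ u.
  by apply: prod_pair => // d dn; rewrite divDiv // coprime_sym.
have M0 : 0 < M.
  have : 0 < M ^ 2 by rewrite HM expn_gt0 n0.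
  by rewrite expn_gt0 orbF.
set tau := size (divisors M).
have HT : T M ^ 2 = M ^ tau.
  by have := @prod_pair M predT M0 (fun _ _ => erefl); rewrite count_predT.
have E : 4 * p = u * tau.
  apply/eqP; rewrite -(eqn_exp2l _ _ n1).
  rewrite mulnC expnM -H (expnM _ 2 2) HT -expnM mulnC expnM HM -expnM.
  by [].
set q := pdiv n; have qp : prime q by apply: pdiv_prime.
have q1 := prime_gt1 qp; have q0 := prime_gt0 qp.
set a := logn q n.
have a0 : 0 < a by rewrite /a logn_gt0 mem_primes qp n0 pdiv_dvd.
have [r cqr nE] := pfactor_coprime qp n0; rewrite -/a in nE.
have r0 : 0 < r by move: n0; rewrite nE muln_gt0 => /andP[].
case: (ltngtP r 1) => [|r1|r1]; first by rewrite ltnS leqn0 => /eqP r00; rewrite r00 in r0.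
  set x := q ^ a.
  have x1 : 1 < x by rewrite /x -(exp1n a) ltn_exp2r.
  have cxr : coprime x r by rewrite /x coprime_sym coprimeXr // coprime_sym.
  have nx : n %/ x = r by rewrite nE mulnK // ltnW.
  have nr : n %/ r = x by rewrite nE mulKn.
  have xn : x < n by rewrite nE -{1}(mul1n x) ltn_mul2r r1 ltnW.
  have rn : r < n by rewrite nE -{1}(muln1 r) ltn_mul2l r0.
  have xr : x != r.
    apply/eqP => exr; move: cxr; rewrite exr /coprime gcdnn.
    by rewrite (gtn_eqF r1).
  have u4 : 4 <= u.
    rewrite /u -size_filter.
    have : size [:: 1; x; r; n] <= size (filter (fun d => coprime d (n %/ d)) (divisors n)).
      apply: uniq_leq_size.
        rewrite /= !inE !negb_or (ltn_eqF x1) (ltn_eqF r1) (ltn_eqF n1) xr.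
        by rewrite (ltn_eqF xn) (ltn_eqF rn).
      move=> d; rewrite !inE => /orP[/eqP ->|/orP[/eqP ->|/orP[/eqP ->|/eqP ->]]];
        rewrite mem_filter -dvdn_divisors //.
      - by rewrite coprime1n dvd1n.
      - by rewrite nx cxr nE dvdn_mull.
      - by rewrite nr coprime_sym cxr nE dvdn_mulr.
      - by rewrite divnn n0 coprimen1 dvdnn.
    by [].
  set b := logn q M.
  have hb : 2 * b = u * a.
    by rewrite /b -lognX HM lognX.
  have b2 : 2 <= b by nia.
  have [M' cqM' ME] := pfactor_coprime qp M0; rewrite -/b in ME.
  have M'0 : 0 < M' by move: M0; rewrite ME muln_gt0 => /andP[].
  have tE : tau = size (divisors M') * b.+1.
    rewrite /tau ME tau_mul ?tau_pp ?expn_gt0 ?q0 //.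
    by rewrite coprime_sym coprimeXl // coprime_sym.
  have M'1 : 1 < M'.
    rewrite ltn_neqAle M'0 andbT eq_sym; apply/negP => /eqP M'e.
    have rM : r %| M ^ 2.
      by rewrite HM; apply: dvdn_exp; [lia | rewrite nE dvdn_mulr].
    have qr : pdiv r %| q ^ (b * 2).
      rewrite expnM; have -> : q ^ b = M by rewrite ME M'e mul1n.
      by apply: dvdn_trans (pdiv_dvd r) rM.
    move: qr; rewrite Euclid_dvdX ?pdiv_prime // dvdn_prime2 ?pdiv_prime // => /andP[/eqP e _].
    by move: cqr; rewrite prime_coprime // -e pdiv_dvd.
  have t2 := tau_ge2 M'1.
  move: E; rewrite tE; set k := size (divisors M') => E.
  have : p %| u * (k * b.+1) by rewrite -E dvdn_mull.
  rewrite !Euclid_dvdM // => /orP[/dvdn_leq|/orP[/dvdn_leq|/dvdn_leq]].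
  - move=> h; have pu : p <= u by apply: h; lia.
    nia.
  - move=> h; have pu : p <= k by apply: h; lia.
    nia.
  - move=> h; have pu : p <= b.+1 by apply: h.
    nia.
have nq : n = q ^ a by rewrite nE r1 mul1n.
have u2 : u = 2 by rewrite /u nq u_pp.
rewrite u2 in HM E.
have Mn : M = n by apply/eqP; rewrite -(@eqn_exp2r _ _ 2) // HM.
have t : tau = a.+1 by rewrite /tau Mn nq tau_pp.
exists q; split => //; rewrite nq; congr (_ ^ _).
rewrite t in E; lia.
Qed.
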